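(* Let $n\in\mathbb{N}$ and let $\sigma$ be a probability distribution on $[n]$ such that $\sigma_{\le i}>\tfrac in$ for every $i\in[n-1]$, and let $\pi=\bigotimes_{i=1}^{n-1}\mathrm{Geom}\big(1-\frac{i}{n\sigma_{\le i}}\big)$. For $(\vec d,i)\in\mathbb{N}_0^{n-1}\times[n]$ let $\nu(\vec d,i)$ be the probability that the transitional state $(\vec d,i)$ occurs during one transition according to $P$ started from $\vec d_{\mathrm{start}}\sim\pi$. Then \[\nu(\vec d,i)=\pi(\vec d)\cdot\sigma_{\le i}\quad\text{for all }(\vec d,i)\in\mathbb{N}_0^{n-1}\times[n].\]
   Context: For a probability distribution $\sigma$ on $[n]$ write $\sigma_i=\Pr_{i^*\sim\sigma}[i^*=i]$ and $\sigma_{\le i}=\Pr_{i^*\sim\sigma}[i^*\le i]$. $\mathrm{Geom}(p)$ is the number of failed independent Bernoulli($p$) trials before the first success (support $\mathbb{N}_0$); $\bigotimes$ is the product of independent distributions, and $\pi(\vec d)$ is the probability mass at $\vec d$. Let $\vec e_i$ be the $i$-th unit vector in $\mathbb{N}_0^{n-1}$ for $i\in[n-1]$, with conventions $d_n=\infty$, $\vec e_n=\vec0$. A transition according to $P$ from a state $\vec d_{\mathrm{start}}\in\mathbb{N}_0^{n-1}$ passes through transitional states $(\vec d,i)\in\mathbb{N}_0^{n-1}\times[n]$: (1) sample $i^*\sim\sigma$ and go to $(\vec d_{\mathrm{start}},i^* )$. (2) While in $(\vec d,i)$: if $d_i>0$, then with probability $(i-1)/i$ move to $(\vec d-\vec e_i+\vec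 e_{i-1},i)$ and with probability $1/i$ end the transition in state $\vec d-\vec e_i$; if $d_i=0$, move to $(\vec d,i+1)$. *)

(* Defs.v *)
From HB Require Import structures.
From mathcomp Require Import all_boot all_order all_algebra.
From mathcomp Require Import all_classical all_reals all_analysis.
Set Implicit Arguments. Unset Strict Implicit. Unset Printing Implicit Defensive.
Import Order.TTheory GRing.Theory Num.Theory.
Local Open Scope ring_scope.

(* Indices of [n] are natural numbers 1..n.
   A state vec d in N_0^{n-1} is a finite function d : 'I_(n-1) -> nat, where
   the ordinal j stores the coordinate d_{j+1}.
   A transitional state (d,i) is a pair (d, i) with i : nat (only 1 <= i <= n
   ever carries mass).  sigma : nat -> R, only its values on 1..n matter. *)

Definition vec (n : nat) := {ffun 'I_n.-1 -> nat}.
Definition tstate (n : nat) := (vec n * nat)%type.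

(* coordinate d_i for i in [n-1]; 0 otherwise (d_n = oo is handled separately) *)
Definition coord (n : nat) (d : vec n) (i : nat) : nat :=
  \sum_(j : 'I_n.-1 | j.+1 == i) d j.

Definition sigma_le (R : realType) (sigma : nat -> R) (i : nat) : R :=
  \sum_(1 <= j < i.+1) sigma j.

Definition geom_p (R : realType) (n : nat) (sigma : nat -> R) (i : nat) : R :=
  1 - i%:R / (n%:R * sigma_le sigma i).

Definition geom_pmf (R : realType) (p : R) (k : nat) : R := (1 - p) ^+ k * p.

Definition pi_mass (R : realType) (n : nat) (sigma : nat -> R) (d : vec n) : R :=
  \prod_(j : 'I_n.-1) geom_pmf (geom_p n sigma j.+1) (d j).

(* Initial transitional state: d_start ~ pi, i^* ~ sigma *)
Definition init_mass (R : realType) (n : nat) (sigma : nat -> R)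
  (x : tstate n) : R :=
  pi_mass sigma x.1 * (if (1 <= x.2 <= n)%N then sigma x.2 else 0).

(* "d_i > 0" with the convention d_n = oo *)
Definition pos_coord (n : nat) (x : tstate n) : bool :=
  (x.2 == n) || (0 < coord x.1 x.2)%N.

(* The (unique) non-terminating successor of a transitional state:
   if d_i > 0 : (d - e_i + e_{i-1}, i)   (e_n = 0, and e_0 = 0 is irrelevant
                                          since the move then has prob. 0)
   if d_i = 0 : (d, i+1) *)
Definition next_state (n : nat) (x : tstate n) : tstate n :=
  if pos_coord x then
    ([ffun j : 'I_n.-1 => (x.1 j - (j.+1 == x.2) + (j.+1 == x.2.-1))%N], x.2)
  else (x.1, x.2.+1).

(* probability of the move to next_state (the rest is termination) *)
Definition move_prob (R : realType) (n : nat) (x : tstate n) : R :=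
  if pos_coord x then (x.2.-1)%:R / (x.2)%:R else 1.

Local Open Scope ereal_scope.

(* first_visit sigma tgt k y:
   for y <> tgt, probability of being in y after k moves without having
   visited tgt before; for y = tgt, probability that tgt is visited for the
   first time after exactly k moves. *)
Fixpoint first_visit (R : realType) (n : nat) (sigma : nat -> R)
  (tgt : tstate n) (k : nat) (y : tstate n) : \bar R :=
  match k with
  | 0 => (init_mass sigma y)%:E
  | k'.+1 =>
      \esum_(x in [set x : tstate n | x <> tgt /\ next_state x = y])
        (first_visit sigma tgt k' x * (move_prob R x)%:E)
  end.

Definition nu (R : realType) (n : nat) (sigma : nat -> R) (tgt : tstate n)
  : \bar R :=
  \sum_(k <oo) first_visit sigma tgt k tgt.

(* Main.v *)
Require Import Defs.
From HB Require Import structures.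
From mathcomp Require Import all_boot all_order all_algebra.
From mathcomp Require Import all_classical all_reals all_analysis.
From mathcomp Require Import zify.
From mathcomp.algebra_tactics Require Import ring lra.
Import Order.TTheory GRing.Theory Num.Theory.
Set Implicit Arguments. Unset Strict Implicit. Unset Printing Implicit Defensive.
Local Open Scope ring_scope.

Lemma coord_ord n (d : vec n) (j : 'I_n.-1) : Defs.coord d j.+1 = d j.
Proof.
rewrite /Defs.coord (big_pred1 j) // => k /=; by rewrite eqSS.
Qed.

Lemma coord_out n (d : vec n) k : (k == 0)%N || (n.-1 < k)%N -> Defs.coord d k = 0%N.
Proof.
move=> hk; rewrite /Defs.coord big_pred0 // => j; apply/negP => /eqP hj.
have := ltn_ord j; lia.
Qed.

Definition ltk n (x y : tstate n) : bool :=
  (x.2 < y.2)%N || ((x.2 == y.2) && (Defs.coord x.1 x.2.-1 < Defs.coord y.1 y.2.-1)%N).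
Definition lek n (x y : tstate n) : bool :=
  (x.2 < y.2)%N || ((x.2 == y.2) && (Defs.coord x.1 x.2.-1 <= Defs.coord y.1 y.2.-1)%N).

Lemma ltk_lek_trans n (a b c : tstate n) : ltk a b -> lek b c -> ltk a c.
Proof. rewrite /ltk /lek; lia. Qed.
Lemma ltk_lek n (a b : tstate n) : ltk a b -> lek a b.
Proof. rewrite /ltk /lek; lia. Qed.
Lemma ltk_irr n (a : tstate n) : ltk a a = false.
Proof. rewrite /ltk; lia. Qed.

Lemma step_lt (R : realType) n (x : tstate n) : (0 < n)%N ->
  move_prob R x != 0 -> ltk x (next_state x).
Proof.
move=> hn; rewrite /move_prob /next_state.
case hp: (pos_coord x) => /=; last by move=> _; rewrite /ltk /= ltnSn.
move=> hmp.
have hi2 : (2 <= x.2)%N.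
  case: x hp hmp => d [|[|i]] //= _; by rewrite ?mul0r ?eqxx.
have hin : (x.2 <= n)%N.
  move: hp; rewrite /pos_coord; case/orP => [/eqP -> //|].
  case: (leqP x.2 n) => // hlt; rewrite coord_out //; apply/orP; right; lia.
have hj : (x.2.-2 < n.-1)%N by lia.
set j := Ordinal hj.
have e : x.2.-1 = j.+1 by rewrite /=; lia.
rewrite /ltk /= ltnn eqxx /= e !coord_ord ffunE.
have -> : (j.+1 == x.2) = false by rewrite /=; lia.
have -> : (j.+1 == j.+1) = true by rewrite eqxx.
lia.
Qed.

Local Open Scope ereal_scope.

Lemma mp_ge0 (R : realType) n (x : tstate n) : (0 <= move_prob R x)%R.
Proof.
rewrite /move_prob; case: ifP => _ //; apply: divr_ge0; exact: ler0n.
Qed.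

Lemma fv_ge0 (R : realType) n (sigma : nat -> R)
  (hinit : forall y : tstate n, (0 <= init_mass sigma y)%R) (t : tstate n) k (y : tstate n) :
  0 <= first_visit sigma t k y.
Proof.
elim: k y => [|k IH] y /=; first by rewrite lee_fin.
apply: esum_ge0 => x _; apply: mule_ge0 => //; rewrite lee_fin; exact: mp_ge0.
Qed.

Lemma esum_single (R : realType) (T : choiceType) (S : set T) (a : T -> \bar R) (t : T) :
  S t -> (forall x, S x -> x <> t -> a x = 0) -> 0 <= a t ->
  \esum_(x in S) a x = a t.
Proof.
move=> St a0 at0; rewrite -(esum_set1 at0) esum_mkcond [RHS]esum_mkcond.
apply: eq_esum => x _.
have [->|xt] := eqVneq x t.
  by rewrite (mem_set St) (mem_set (erefl t : [set t]%classic t)).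
rewrite (memNset (_ : ~ [set t]%classic x)); last by move=> /= h; rewrite h eqxx in xt.
by case: ifP => // /set_mem Sx; apply: a0 => // h; rewrite h eqxx in xt.
Qed.

Lemma fv_agree (R : realType) n (sigma : nat -> R) (hn : (0 < n)%N) k :
  forall (z t1 t2 : tstate n), lek z t1 -> lek z t2 ->
  first_visit sigma t1 k z = first_visit sigma t2 k z.
Proof.
elim: k => [//|k IH] z t1 t2 h1 h2 /=.
rewrite esum_mkcond [RHS]esum_mkcond; apply: eq_esum => x _.
have [m0|m0] := eqVneq (move_prob R x) 0%R.
  by rewrite m0 !mule0; case: ifP => _; case: ifP.
have hlt := step_lt hn m0.
have [hz|hz] := eqVneq (next_state x) z.
  have l1 : ltk x t1 by apply: ltk_lek_trans h1; rewrite -hz.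
  have l2 : ltk x t2 by apply: ltk_lek_trans h2; rewrite -hz.
  have n1 : x <> t1 by move=> e; rewrite e ltk_irr in l1.
  have n2 : x <> t2 by move=> e; rewrite e ltk_irr in l2.
  rewrite (mem_set (conj n1 hz : [set x | x <> t1 /\ next_state x = z]%classic x)).
  rewrite (mem_set (conj n2 hz : [set x | x <> t2 /\ next_state x = z]%classic x)).
  by rewrite (IH x t1 t2) // ltk_lek.
rewrite !memNset //= => -[_ e]; by rewrite e eqxx in hz.
Qed.

Lemma eshift (R : realType) (f : nat -> \bar R) : (forall k, 0 <= f k) ->
  \sum_(k <oo) f k = f 0%N + \sum_(k <oo) f k.+1.
Proof.
move=> f0; rewrite nneseries_recl //; congr (_ + _).
have cv : cvgn (fun n => \sum_(0 <= k < n) f k.+1) by apply: is_cvg_nneseries.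
apply/cvg_lim => //.
rewrite -cvg_shiftS /=.
have -> : (fun n => \sum_(1 <= k < n.+1) f k) = (fun n => \sum_(0 <= k < n) f k.+1).
  by apply/funext => m; rewrite big_add1.
exact: cv.
Qed.

Local Close Scope ereal_scope.

Lemma q_sig (R : realType) n (sigma : nat -> R)
  (hgt : forall i : nat, (1 <= i <= n.-1)%N -> i%:R / n%:R < sigma_le sigma i)
  k : (1 <= k <= n.-1)%N ->
  (1 - geom_p n sigma k) * sigma_le sigma k = k%:R / n%:R.
Proof.
move=> hk; have hs := hgt k hk.
have hn : (n%:R : R) != 0 by rewrite pnatr_eq0; lia.
have s0 : 0 < sigma_le sigma k.
  by apply: le_lt_trans hs; apply: divr_ge0; exact: ler0n.
rewrite /geom_p; field; apply/andP; split => //; exact: lt0r_neq0.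
Qed.

Lemma q_bounds (R : realType) n (sigma : nat -> R)
  (hgt : forall i : nat, (1 <= i <= n.-1)%N -> i%:R / n%:R < sigma_le sigma i)
  k : (1 <= k <= n.-1)%N ->
  0 <= geom_p n sigma k /\ 0 <= 1 - geom_p n sigma k.
Proof.
move=> hk; have hs := hgt k hk.
have hn : (0 : R) < n%:R by rewrite ltr0n; lia.
have s0 : 0 < sigma_le sigma k.
  by apply: le_lt_trans hs; apply: divr_ge0; exact: ler0n.
rewrite /geom_p; split; last first.
  by rewrite opprB addrC subrK; apply: divr_ge0; [exact: ler0n|apply: mulr_ge0; exact: ltW].
rewrite subr_ge0 invfM mulrA ler_pdivrMr // mul1r; exact: ltW.
Qed.

Lemma pi_ge0 (R : realType) n (sigma : nat -> R)
  (hgt : forall i : nat, (1 <= i <= n.-1)%N -> i%:R / n%:R < sigma_le sigma i)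
  (d : vec n) : 0 <= pi_mass sigma d.
Proof.
apply: prodr_ge0 => j _.
have hj : (1 <= j.+1 <= n.-1)%N by have := ltn_ord j; lia.
have [h1 h2] := q_bounds hgt hj.
rewrite /geom_pmf; apply: mulr_ge0 => //; exact: exprn_ge0.
Qed.

Lemma init_ge0 (R : realType) n (sigma : nat -> R)
  (sigma_ge0 : forall j : nat, (1 <= j <= n)%N -> 0 <= sigma j)
  (hgt : forall i : nat, (1 <= i <= n.-1)%N -> i%:R / n%:R < sigma_le sigma i)
  (y : tstate n) : 0 <= init_mass sigma y.
Proof.
rewrite /init_mass; apply: mulr_ge0; first exact: pi_ge0.
by case: ifP => // h; apply: sigma_ge0.
Qed.

Lemma pi_add (R : realType) n (sigma : nat -> R) (d : vec n) (j0 : 'I_n.-1) :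
  pi_mass sigma [ffun j => (d j + (j == j0))%N] =
  pi_mass sigma d * (1 - geom_p n sigma j0.+1).
Proof.
rewrite /pi_mass (bigD1 j0) //= [in RHS](bigD1 j0) //= ffunE eqxx addn1.
rewrite (eq_bigr (fun j : 'I_n.-1 => geom_pmf (geom_p n sigma j.+1) (d j))); last first.
  by move=> j /negbTE hj; rewrite ffunE hj addn0.
rewrite /geom_pmf exprS; ring.
Qed.

Lemma pi_add' (R : realType) n (sigma : nat -> R) (d : vec n) k :
  (1 <= k <= n.-1)%N ->
  pi_mass sigma [ffun j : 'I_n.-1 => (d j + (j.+1 == k))%N] =
  pi_mass sigma d * (1 - geom_p n sigma k).
Proof.
move=> hk; have hj : (k.-1 < n.-1)%N by lia.
set j0 := Ordinal hj.
have -> : [ffun j : 'I_n.-1 => (d j + (j.+1 == k))%N] = [ffun j => (d j + (j == j0))%N].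
  apply/ffunP => j; rewrite !ffunE; congr (_ + nat_of_bool _)%N.
  by apply/eqP/eqP => [h|->]; [apply/val_inj => /=; lia | rewrite /=; lia].
rewrite pi_add /=; congr (_ * (1 - geom_p n sigma _)); lia.
Qed.

Lemma lek_refl n (a : tstate n) : lek a a.
Proof. rewrite /lek; lia. Qed.

Unset Implicit Arguments.

Theorem lemma7 (R : realType) (n : nat) (sigma : nat -> R)
  (sigma_ge0 : forall j : nat, (1 <= j <= n)%N -> 0 <= sigma j)
  (sigma_sum1 : \sum_(1 <= j < n.+1) sigma j = 1)
  (sigma_le_gt : forall i : nat, (1 <= i <= n.-1)%N ->
      i%:R / n%:R < sigma_le sigma i) :
  forall (d : vec n) (i : nat), (1 <= i <= n)%N ->
    nu sigma (d, i) = (pi_mass sigma d * sigma_le sigma i)%:E.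
Proof.
move=> dd ii /andP[hi1 hin0].
have hn : (0 < n)%N by lia.
have hinit := init_ge0 sigma_ge0 sigma_le_gt.
have fv0 := fv_ge0 hinit.
suff main : forall i, (i <= n)%N -> forall d : vec n,
    nu sigma (d, i) = (pi_mass sigma d * sigma_le sigma i)%:E by apply: main.
elim=> [|i IHi] hi d.
  rewrite /sigma_le big_geq // mulr0 /nu; apply: eseries0 => k _ _.
  case: k => [|k] /=; first by rewrite /init_mass /= mulr0.
  apply: esum1 => -[xd xi] [_]; rewrite /next_state /pos_coord /=.
  case: ifP => hp [_ e] //; subst xi.
  by move: hp; rewrite coord_out //= orbF; move/eqP => e; rewrite -e in hn.
have hin : (i < n)%N by lia.
suff H : forall c (d : vec n), Defs.coord d i = c ->
    nu sigma (d, i.+1) = (pi_mass sigma d * sigma_le sigma i.+1)%:E by exact: H.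
elim=> [|c IHc] {}d hc.
  set t : tstate n := (d, i.+1).
  set p0 : tstate n := (d, i).
  have np0 : next_state p0 = t.
    by rewrite /next_state /pos_coord /= hc /= orbF (_ : (i == n) = false) //; lia.
  have S0 : [set x | x <> t /\ next_state x = t]%classic p0.
    by split => // -[] /eqP; lia.
  have uq : forall k x, [set x | x <> t /\ next_state x = t]%classic x -> x <> p0 ->
      (first_visit sigma t k x * (move_prob R x)%:E = 0)%E.
    move=> k [xd xi] [xt hx] xp.
    have [m0|m0] := eqVneq (move_prob R (xd, xi)) 0; first by rewrite m0 mule0.
    exfalso; move: hx m0; rewrite /next_state /move_prob; case: ifP => hp /= e.
      case: e => ef e2; subst xi => /= m0.
      have ip : (0 < i)%N by case: (i) m0 => //=; rewrite mul0r eqxx.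
      have hj : (i.-1 < n.-1)%N by lia.
      have := coord_ord d (Ordinal hj); rewrite /= (prednK ip) hc -ef ffunE /=.
      rewrite (prednK ip) eqxx; lia.
    move=> _; rewrite /t in e; case: e => e1 e2; apply: xp.
    by rewrite /p0 e1; congr pair; lia.
  have E : forall k, first_visit sigma t k.+1 t =
      (first_visit sigma p0 k p0 * (move_prob R p0)%:E)%E.
    move=> k /=; rewrite (esum_single S0 (uq k)); last first.
      by apply: mule_ge0 => //; rewrite lee_fin; exact: mp_ge0.
    rewrite (@fv_agree R n sigma hn k p0 t p0) // ?lek_refl // /lek /=; lia.
  have IH0 := IHi (ltnW hi) d; rewrite /nu in IH0.
  rewrite /nu (eshift (fun k => fv0 t k t)) (eq_eseriesr (fun k _ => E k)).
  rewrite /move_prob /p0 /pos_coord /= hc (_ : (i == n) = false) /=; last by lia.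
  under eq_eseriesr do rewrite mule1.
  rewrite IH0 /init_mass /= hi -EFinD; congr EFin.
  rewrite /sigma_le [X in _ = _ * X]big_nat_recr //=; ring.
have ip : (0 < i)%N.
  case: (i) hc => // h; by rewrite coord_out in h.
have hj0 : (i.-1 < n.-1)%N by lia.
set j0 := Ordinal hj0.
have ej0 : j0.+1 = i by rewrite /= prednK.
have hdj : d j0 = c.+1 by rewrite -coord_ord ej0.
set dB : vec n := [ffun j : 'I_n.-1 => (d j - (j.+1 == i) + (j.+1 == i.+1))%N].
have hcB : Defs.coord dB i = c.
  rewrite -ej0 coord_ord ffunE ej0 eqxx (_ : (i == i.+1) = false) ?hdj //; lia.
set t : tstate n := (d, i.+1).
set p0 : tstate n := (dB, i.+1).
have hpos : pos_coord p0.
  rewrite /pos_coord /=; case: (eqVneq i.+1 n) => //= ne.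
  have hj1 : (i < n.-1)%N by lia.
  have := coord_ord dB (Ordinal hj1); rewrite /= => ->.
  rewrite ffunE /= eqxx; lia.
have np0 : next_state p0 = t.
  rewrite /next_state hpos /t /=; congr pair.
  apply/ffunP => j; rewrite !ffunE.
  case: (eqVneq j.+1 i) => [ej|nj].
    have : d j = c.+1 by rewrite -coord_ord ej.
    rewrite ej /= (_ : (i == i.+1) = false) /=; lia.
  move: nj; rewrite /=; lia.
have S0 : [set x | x <> t /\ next_state x = t]%classic p0.
  split => // -[] e; move: hcB; rewrite e hc; lia.
have uq : forall k x, [set x | x <> t /\ next_state x = t]%classic x -> x <> p0 ->
    (first_visit sigma t k x * (move_prob R x)%:E = 0)%E.
  move=> k [xd xi] [xt hx] xp.
  have [m0|m0] := eqVneq (move_prob R (xd, xi)) 0; first by rewrite m0 mule0.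
  exfalso; move: hx m0; rewrite /next_state /move_prob; case: ifP => hp /= e.
    case: e => ef e2; subst xi => _; apply: xp; rewrite /p0; congr pair.
    apply/ffunP => j; rewrite ffunE.
    have := congr1 (fun f : vec n => f j) ef; rewrite /= ffunE /= => ej.
    case: (eqVneq j.+1 i.+1) => [ej1|nj1].
      have : (0 < xd j)%N.
        move: hp; rewrite /pos_coord /= -ej1 coord_ord; have := ltn_ord j; lia.
      move: ej; rewrite ej1 eqxx /=; lia.
    move: ej nj1; case: (eqVneq j.+1 i) => [ej0'|nj0] /=; lia.
  move=> _; rewrite /t in e; case: e => e1 e2.
  have e3 : xi = i by lia.
  by move: hp; rewrite /pos_coord e1 e3 /= hc orbT.
have E : forall k, first_visit sigma t k.+1 t =
    (first_visit sigma p0 k p0 * (move_prob R p0)%:E)%E.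
  move=> k /=; rewrite (esum_single S0 (uq k)); last first.
    by apply: mule_ge0 => //; rewrite lee_fin; exact: mp_ge0.
  rewrite (@fv_agree R n sigma hn k p0 t p0) // ?lek_refl // /lek /= hcB hc; lia.
have IH0 := IHc dB hcB; rewrite /nu in IH0.
rewrite /nu (eshift (fun k => fv0 t k t)) (eq_eseriesr (fun k _ => E k)).
under eq_eseriesr do rewrite muleC.
rewrite nneseriesZl // IH0.
rewrite -EFinM -EFinD; congr EFin.
rewrite /move_prob hpos /= /init_mass /= hin.
set d0 : vec n := [ffun j : 'I_n.-1 => (d j - (j.+1 == i))%N].
have hd : d = [ffun j : 'I_n.-1 => (d0 j + (j.+1 == i))%N].
  apply/ffunP => j; rewrite !ffunE.
  case: (eqVneq j.+1 i) => [ej|nj].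
    have : d j = c.+1 by rewrite -coord_ord ej.
    rewrite /=; lia.
  by rewrite /= !addn0 subn0.
have pd : pi_mass sigma d = pi_mass sigma d0 * (1 - geom_p n sigma i).
  by rewrite [in LHS]hd pi_add' //; lia.
have hs : sigma_le sigma i.+1 = sigma_le sigma i + sigma i.+1.
  by rewrite /sigma_le big_nat_recr.
have qa := @q_sig R n sigma sigma_le_gt i (ltac:(lia)).
have hn0 : (n%:R : R) != 0 by rewrite pnatr_eq0; lia.
have hi0 : ((i.+1)%:R : R) != 0 by rewrite pnatr_eq0.
case: (ltnP i.+1 n) => hlt.
  have pdB : pi_mass sigma dB = pi_mass sigma d0 * (1 - geom_p n sigma i.+1).
    rewrite -pi_add'; last by lia.
    by congr pi_mass; apply/ffunP => j; rewrite !ffunE.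
  have qb := @q_sig R n sigma sigma_le_gt i.+1 (ltac:(lia)).
  rewrite pdB pd -[_ * _ * sigma_le sigma i.+1]mulrA qb.
  rewrite hs -[RHS]mulrA [in RHS]mulrDr qa.
  field; apply/andP; split => //.
have en : i.+1 = n by lia.
have pdB : pi_mass sigma dB = pi_mass sigma d0.
  congr pi_mass; apply/ffunP => j; rewrite !ffunE.
  have hj : (j < i)%N by have := ltn_ord j; lia.
  rewrite (_ : (j.+1 == i.+1) = false) ?addn0 //; lia.
have s1 : sigma_le sigma i.+1 = 1 by rewrite en.
have qa2 : (1 - geom_p n sigma i) * (1 - sigma i.+1) = i%:R / i.+1%:R.
  have en2 : (i.+1%:R : R) = n%:R by rewrite en.
  by rewrite en2 -qa; congr (_ * _); rewrite -s1 hs; ring.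
rewrite pdB pd s1 -qa2; ring.
Qed.
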